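(* Let $(\mathcal A,\varphi,\mathcal F,\Phi)$ be a ncps of type B$'$ with associated infinitesimal ncps $(\mathcal B,\varphi,\varphi')$, let $q\in\mathcal F$ with $q^2=q$, $\Phi(q)=1$ and $(\mathcal A,\{q\})$ cyclic-antimonotone independent, let $p:=1_{\mathcal B}-q$, and let $\psi:=\varphi|_{p\mathcal Bp}$, $\psi':=(\varphi+\varphi')|_{p\mathcal Bp}$ on the algebra $p\mathcal Bp$ with unit $p$. Let $a\in\mathcal A$, let $\mu$ be the distribution of $a$ w.r.t. $\varphi$ and $\tau$ the inverse Markov–Krein transform of $\mu$. Then the infinitesimal distribution of $\tilde a:=pap$ with respect to $(p\mathcal Bp,\psi,\psi')$ is $(\mu,\mu-\tau)$.
   Context: Ncps of type B$'$ $(\mathcal A,\varphi,\mathcal F,\Phi)$: $\mathcal A$ unital complex algebra, $\varphi(1_{\mathcal A})=1$, $\mathcal F$ an algebra which is an $\mathcal A$-bimodule compatible with its multiplication, $\Phi:\mathcal F\to\mathbb C$ linear. $\mathcal B=\mathcal A\oplus\mathcal F$ with product $(a_1,f_1)(a_2,f_2)=(a_1a_2,a_1f_2+f_1a_2+f_1f_2)$, unit $1_{\mathcal A}$; $\varphi(a+f):=\varphi(a)$, $\varphi'(a+f):=\Phi(f)$. Cyclic-antimonotone independence of $(\mathcal A,\{q\})$: $\Phi(a_0qa_1\cdots a_{n-1}qa_n)=\varphi(a_0a_n)\prod_{i=1}^{n-1}\varphi(a_i)\Phi(q^n)$ for $a_l\in\mathcal A$. The distribution of $a$ w.r.t. $\varphi$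 is $\mu(x^n)=\varphi(a^n)$ on $\mathbb C[x]$. The infinitesimal distribution of $\tilde a$ in $(p\mathcal Bp,\psi,\psi')$ is the pair $x^n\mapsto\psi(\tilde a^n)$, $x^n\mapsto\psi'(\tilde a^n)$ with $\tilde a^0=p$. With $G_\mu(z)=\sum_{n\ge0}\mu(x^n)z^{-n-1}$ as a formal series, the inverse Markov–Krein transform of $\mu$ is the linear functional $\tau$ on $\mathbb C[x]$ determined by $\frac{d}{dz}G_\mu(z)=-G_\tau(z)G_\mu(z)$. *)

(* Defs.v *)
From HB Require Import structures.
From mathcomp Require Import all_boot all_order all_algebra.
From mathcomp Require Import reals.
From mathcomp Require Export complex.
Set Implicit Arguments. Unset Strict Implicit. Unset Printing Implicit Defensive.
Import Order.TTheory GRing.Theory Num.Theory.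
Local Open Scope ring_scope.

Section TypeBprime.
Variables (R : realType).
Local Notation C := (R[i]).
Variables (A : algType C) (F : lmodType C).
Variables (mulF : F -> F -> F) (actL : A -> F -> F) (actR : F -> A -> F).

Definition Fstructure_axioms : Prop :=
  (forall (k : C) f g h, mulF (k *: f + g) h = k *: mulF f h + mulF g h) /\
      (forall (k : C) f g h, mulF h (k *: f + g) = k *: mulF h f + mulF h g) /\
      (forall f g h, mulF f (mulF g h) = mulF (mulF f g) h) /\
      (forall (k : C) a b f, actL (k *: a + b) f = k *: actL a f + actL b f) /\
      (forall (k : C) a f g, actL a (k *: f + g) = k *: actL a f + actL a g) /\
      (forall (k : C) a b f, actR f (k *: a + b) = k *: actR f a + actR f b) /\
      (forall (k : C) a f g, actR (k *: f + g) a = k *: actR f a + actR g a) /\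
   (forall f, actL 1 f = f) /\ (forall f, actR f 1 = f) /\
       (forall a b f, actL (a * b) f = actL a (actL b f)) /\
       (forall a b f, actR f (a * b) = actR (actR f a) b) /\
       (forall a b f, actL a (actR f b) = actR (actL a f) b) /\
       (forall a f g, actL a (mulF f g) = mulF (actL a f) g) /\
       (forall a f g, mulF (actR f a) g = mulF f (actL a g)) /\
       (forall a f g, actR (mulF f g) a = mulF f (actR g a)).

Definition ncps_typeBprime (phi : A -> C) (Phi : F -> C) : Prop :=
  [/\ Fstructure_axioms, linear phi, linear Phi & phi 1 = 1].

(* The algebra B = A (+) F, elements are pairs (a, f) = a + f. *)
Definition mulB (x y : A * F) : A * F :=
  (x.1 * y.1, actL x.1 y.2 + actR x.2 y.1 + mulF x.2 y.2).
Definition oneB : A * F := (1, 0).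
Definition addB (x y : A * F) : A * F := (x.1 + y.1, x.2 + y.2).
Definition oppB (x : A * F) : A * F := (- x.1, - x.2).

Definition phiB (phi : A -> C) (x : A * F) : C := phi x.1.
Definition phiB' (Phi : F -> C) (x : A * F) : C := Phi x.2.

Definition qpow (q : F) (n : nat) : F := iter n.-1 (fun f => mulF f q) q.

Fixpoint wordq (q : F) (a : nat -> A) (k : nat) : F :=
  match k with
  | 0 => actL (a 0%N) q
  | k'.+1 => mulF (actR (wordq q a k') (a k)) q
  end.

Definition cyclic_antimonotone_indep (phi : A -> C) (Phi : F -> C) (q : F) : Prop :=
  forall (n : nat) (a : nat -> A), (0 < n)%N ->
    Phi (actR (wordq q a n.-1) (a n)) =
      phi (a 0%N * a n) * (\prod_(1 <= i < n) phi (a i)) * Phi (qpow q n).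

Fixpoint powp (p x : A * F) (n : nat) : A * F :=
  match n with
  | 0 => p
  | n'.+1 => mulB (powp p x n') x
  end.

End TypeBprime.

Definition distribution (R : realType) (A : algType R[i]) (phi : A -> R[i]) (a : A)
  (P : {poly R[i]}) : R[i] :=
  \sum_(i < size P) P`_i * phi (a ^+ i).

(* tau is the inverse Markov-Krein transform of mu:  d/dz G_mu = - G_tau G_mu
   as formal series in z^{-1}, G_nu(z) = sum_n nu(x^n) z^{-n-1}.  Comparing the
   coefficients of z^{-k-2} this says (k+1) mu(x^k) = sum_{j=0}^k tau(x^j) mu(x^{k-j}). *)
Definition inverse_Markov_Krein (R : realType) (mu tau : {poly R[i]} -> R[i]) : Prop :=
  linear tau /\
  forall k : nat,
    (k.+1)%:R * mu 'X^k = \sum_(j < k.+1) tau 'X^j * mu 'X^(k - j).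

(* Main.v *)
Require Import Defs.
From HB Require Import structures.
From mathcomp Require Import all_boot all_order all_algebra.
From mathcomp Require Import reals complex.
From mathcomp Require Import ring zify.
Import GRing.Theory Num.Theory.
Local Open Scope ring_scope.

Lemma lin_prop {R : realType} {U V : lmodType R[i]} {f : U -> V} :
  (forall k x y, f (k *: x + y) = k *: f x + f y) ->
  [/\ f 0 = 0, (forall x, f (- x) = - f x), (forall x y, f (x + y) = f x + f y)
    & (forall x y, f (x - y) = f x - f y)].
Proof.
move=> H.
have f0 : f 0 = 0.
  have e := H 1 0 0; rewrite !scale1r addr0 in e.
  by apply/(addrI (f 0)); rewrite addr0 -e.
have fN : forall x, f (- x) = - f x.
  by move=> x; have := H (-1) x 0; rewrite addr0 f0 addr0 !scaleN1r.
have fD : forall x y, f (x + y) = f x + f y.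
  by move=> x y; have := H 1 x y; rewrite !scale1r.
by split=> // x y; rewrite fD fN.
Qed.

Lemma zid (V : zmodType) (X Y Z U W : V) : -X - Y + Z + U + (-W - -Y - Z) = U - W - X.
Proof.
rewrite opprK !addrA.
rewrite (ACl ((((4*5)*1)*(2*6))*(3*7))%AC) /=.
by rewrite addNr subrr !addr0.
Qed.

Definition fseq {R : realType} {A : algType R[i]} {F : lmodType R[i]}
  (mulF : F -> F -> F) (actL : A -> F -> F) (actR : F -> A -> F) (q : F) (a : A) :
  nat -> F :=
  fix fs n := match n with
  | 0 => - q
  | n'.+1 => actR (fs n') a - mulF (actR (fs n') a) q - actL (a ^+ n'.+1) q
  end.

Definition Tw {R : realType} {A : algType R[i]} {F : lmodType R[i]}
  (mulF : F -> F -> F) (actR : F -> A -> F) (q : F) (ds : seq A) : F :=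
  foldl (fun g d => mulF (actR g d) q) q ds.

Fixpoint Ef {R : realType} (m : nat -> R[i]) (d : nat) (j : nat) {struct d} : R[i] :=
  match d with
  | 0 => - m j
  | d'.+1 => Ef m d' j.+1 - m j * Ef m d' 1
  end.

Definition Ep {R : realType} (m : nat -> R[i]) (d : nat) : R[i] :=
  match d with 0 => 1 | d'.+1 => Ef m d' 1 end.

Lemma scalar_part (R : realType) (m : nat -> R[i]) (G : nat -> nat -> R[i])
  (H : nat -> nat -> nat -> R[i]) (tau : nat -> R[i]) :
  m 0%N = 1 ->
  (forall l, G 0%N l = - m l) ->
  (forall j l, H 0%N j l = - (m l * m j)) ->
  (forall k l, G k.+1 l = G k l.+1 - H k 1%N l - m (k.+1 + l)%N) ->
  (forall k j l, H k.+1 j l = H k j.+1 l - m j * H k 1%N l - m (k.+1 + l)%N * m j) ->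
  (forall k, k.+1%:R * m k = \sum_(j < k.+1) tau j * m (k - j)%N) ->
  forall n, G n 0%N = - tau n.
Proof.
move=> m0 G0 H0 GS HS Ht.
have bump0 : forall i, bump 0 i = i.+1 by [].
have hE : forall n j l, H n j l = \sum_(x < n.+1) m (x + l)%N * Ef m (n - x) j.
  elim=> [|n IH] j l; first by rewrite H0 big_ord1 /= add0n mulrN.
  rewrite HS !IH [RHS]big_ord_recr /= subnn.
  have -> : \sum_(x < n.+1) m (x + l)%N * Ef m (n.+1 - x) j =
     \sum_(x < n.+1) m (x + l)%N * Ef m (n - x) j.+1 - m j * \sum_(x < n.+1) m (x + l)%N * Ef m (n - x) 1.
    rewrite mulr_sumr -sumrB; apply: eq_bigr => x _.
    rewrite (subSn (leq_ord x)) /=; ring.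
  rewrite addSn /=; ring.
have Ehat : forall d j, Ef m d j = - \sum_(y < d.+1) Ep m (d - y) * m (y + j)%N.
  elim=> [|d IH] j; first by rewrite big_ord1 /= mul1r add0n.
  rewrite /= (IH j.+1) [X in _ = - X]big_ord_recl /=.
  under [in RHS]eq_bigr => y _ do rewrite bump0 subSS addSn.
  under [in LHS]eq_bigr => y _ do rewrite addnS.
  ring.
have inv : forall d, \sum_(i < d.+1) m i * Ep m (d - i) = (d == 0%N)%:R.
  case=> [|d]; first by rewrite big_ord1 /= m0 mulr1.
  rewrite big_ord_recl /= m0 mul1r Ehat.
  under eq_bigr => i _ do rewrite bump0 subSS.
  rewrite addrC; apply/eqP; rewrite subr_eq0; apply/eqP; apply: eq_bigr => i _.
  by rewrite addn1 mulrC.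
have gE : forall n l, G n l = - \sum_(r < n.+1) r.+1%:R * m (r + l)%N * Ep m (n - r).
  elim=> [|n IH] l; first by rewrite G0 big_ord1 /= add0n; ring.
  rewrite GS IH hE.
  rewrite [X in _ = - X]big_ord_recl /= add0n mul1r.
  under [in RHS]eq_bigr => r _ do rewrite bump0 subSS addSn mulrS mulrDl mulrDl mul1r.
  rewrite big_split /= [X in _ = - (_ + (X + _))]big_ord_recr /= subnn.
  under [in LHS]eq_bigr => r _ do rewrite addnS.
  rewrite [X in _ - X - _ = _]big_ord_recl /= ?subn0 add0n.
  have -> : \sum_(i < n) m (bump 0 i + l)%N * Ef m (n - bump 0 i) 1 =
            \sum_(i < n) m (i + l).+1 * Ep m (n - i).
    by apply: eq_bigr => i _; rewrite -(subnSK (ltn_ord i)).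
  rewrite addSn; ring.
move=> n; rewrite gE.
congr (- _).
pose Pt := \poly_(i < n.+1) tau i.
pose Pm := \poly_(i < n.+1) m i.
pose Pe := \poly_(i < n.+1) Ep m i.
have cp : forall (g : nat -> R[i]) i, (i < n.+1)%N -> (\poly_(i < n.+1) g i)`_i = g i.
  by move=> g i Hi; rewrite coef_poly Hi.
have c1 : forall r, (r <= n)%N -> (Pt * Pm)`_r = r.+1%:R * m r.
  move=> r Hr; rewrite coefM Ht; apply: eq_bigr => j _.
  have Hj := ltn_ord j.
  rewrite !cp //; lia.
have c2 : forall d, (d <= n)%N -> (Pm * Pe)`_d = (d == 0%N)%:R.
  move=> d Hd; rewrite coefM -inv; apply: eq_bigr => j _.
  have Hj := ltn_ord j.
  rewrite !cp //; lia.
have L1 : (Pt * Pm * Pe)`_n = \sum_(r < n.+1) r.+1%:R * m (r + 0)%N * Ep m (n - r).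
  rewrite coefM; apply: eq_bigr => r _.
  have Hr := ltn_ord r.
  rewrite c1 ?addn0; last by lia.
  by rewrite cp //; lia.
have L2 : (Pt * (Pm * Pe))`_n = tau n.
  rewrite coefM big_ord_recr /= subnn c2 // cp // mulr1 big1 ?add0r // => j _.
  have Hj := ltn_ord j.
  rewrite c2; last by lia.
  rewrite (_ : (n - j == 0)%N = false) ?mulr0 //; lia.
by rewrite -L1 -L2 mulrA.
Qed.

Theorem proposition5p4
  (R : realType) (A : algType R[i]) (F : lmodType R[i])
  (mulF : F -> F -> F) (actL : A -> F -> F) (actR : F -> A -> F)
  (phi : A -> R[i]) (Phi : F -> R[i])
  (HB' : ncps_typeBprime mulF actL actR phi Phi)
  (q : F) (Hqq : mulF q q = q) (HPhiq : Phi q = 1)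
  (Hind : cyclic_antimonotone_indep mulF actL actR phi Phi q)
  (a : A) (tau : {poly R[i]} -> R[i])
  (Htau : inverse_Markov_Krein (distribution phi a) tau) :
  let p : A * F := addB (oneB A F) (oppB (0, q)) in
  let at_ : A * F := mulB mulF actL actR (mulB mulF actL actR p (a, 0)) p in
  let psi := fun x : A * F => phiB phi x in
  let psi' := fun x : A * F => phiB phi x + phiB' Phi x in
  forall n : nat,
    psi (powp mulF actL actR p at_ n) = distribution phi a 'X^n /\
    psi' (powp mulF actL actR p at_ n) = distribution phi a 'X^n - tau 'X^n.
Proof.
move=> p at_ psi psi' n.
case: HB' => [Fax linphi linPhi phi1].
case: Fax => [mFl [mFr [mFA [aLl [aLr [aRl [aRr [aL1 [aR1 [aLM [aRM [aLR [aLmF [mFRL aRmF]]]]]]]]]]]]]].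
have [P0 PN PD PB] := lin_prop (fun k x y => linPhi k x y).
have MlP h := lin_prop (fun k f g => mFl k f g h).
have MrP h := lin_prop (fun k f g => mFr k f g h).
have LrP b := lin_prop (fun k f g => aLr k b f g).
have RrP c := lin_prop (fun k f g => aRr k c f g).
have Hqpow : forall k, qpow mulF q k = q.
  move=> k; rewrite /qpow; elim: k.-1 => [|j IH] //=.
  by rewrite IH Hqq.
set Tw' := Tw mulF actR q.
have TwR : forall s d, Tw' (rcons s d) = mulF (actR (Tw' s) d) q.
  by move=> s d; rewrite /Tw' /Tw foldl_rcons.
have Tcons : forall ds e, mulF (actR q e) (Tw' ds) = Tw' (e :: ds).
  move=> ds e; elim/last_ind: ds => [|s d IH] //.
  rewrite TwR mFA -aRmF IH -TwR //.
have Hword : forall ds b c, Phi (actR (actL b (Tw' ds)) c) = phi (b * c) * \prod_(d <- ds) phi d.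
  move=> ds b c.
  pose af := fun i : nat => if i == 0%N then b else if (i <= size ds)%N then nth 0 ds i.-1 else c.
  have := Hind (size ds).+1 af (ltn0Sn _).
  have Hw : forall k, (k <= size ds)%N -> wordq mulF actL actR q af k = actL b (Tw' (take k ds)).
    elim=> [|k IH] Hk; first by rewrite /= take0.
    rewrite /= IH ?(ltnW Hk) // (take_nth 0 Hk) TwR aLmF aLR /af /=.
    by rewrite Hk.
  rewrite /= Hw // take_size Hqpow HPhiq mulr1.
  have -> : af (size ds).+1 = c by rewrite /af /= ltnn.
  have -> : af 0%N = b by [].
  move=> ->; congr (_ * _).
  rewrite big_add1 /= [RHS](big_nth 0) !big_nat.
  by apply: eq_bigr => i /andP [_ Hi]; rewrite /af /= Hi.
have Ml0 h : mulF 0 h = 0 by case: (MlP h).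
have MlN h x : mulF (- x) h = - mulF x h by case: (MlP h) => _ H _ _; apply: H.
have MlD h x y : mulF (x + y) h = mulF x h + mulF y h by case: (MlP h) => _ _ H _; apply: H.
have MlB h x y : mulF (x - y) h = mulF x h - mulF y h by case: (MlP h) => _ _ _ H; apply: H.
have Mr0 h : mulF h 0 = 0 by case: (MrP h).
have MrN h x : mulF h (- x) = - mulF h x by case: (MrP h) => _ H _ _; apply: H.
have MrD h x y : mulF h (x + y) = mulF h x + mulF h y by case: (MrP h) => _ _ H _; apply: H.
have MrB h x y : mulF h (x - y) = mulF h x - mulF h y by case: (MrP h) => _ _ _ H; apply: H.
have Lr0 h : actL h 0 = 0 by case: (LrP h).
have LrN h x : actL h (- x) = - actL h x by case: (LrP h) => _ H _ _; apply: H.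
have LrD h x y : actL h (x + y) = actL h x + actL h y by case: (LrP h) => _ _ H _; apply: H.
have LrB h x y : actL h (x - y) = actL h x - actL h y by case: (LrP h) => _ _ _ H; apply: H.
have Rr0 h : actR 0 h = 0 by case: (RrP h).
have RrN h x : actR (- x) h = - actR x h by case: (RrP h) => _ H _ _; apply: H.
have RrD h x y : actR (x + y) h = actR x h + actR y h by case: (RrP h) => _ _ H _; apply: H.
have RrB h x y : actR (x - y) h = actR x h - actR y h by case: (RrP h) => _ _ _ H; apply: H.
have [f [f0 fS]] : exists f : nat -> F, f 0%N = - q /\
   forall k, f k.+1 = actR (f k) a - mulF (actR (f k) a) q - actL (a ^+ k.+1) q.
  by exists (fseq mulF actL actR q a); split.
have Hat : at_ = (a, - actL a q - actR q a + mulF (actR q a) q).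
  rewrite /at_ /p /mulB /addB /oneB /oppB /= oppr0 addr0 !add0r mulr1 mul1r.
  rewrite Lr0 Mr0 addr0 add0r LrN RrN aR1 MlN MrN opprK.
  by [].
have Claim1 : forall k, powp mulF actL actR p at_ k = (a ^+ k, f k) /\ mulF (f k) q = - actL (a ^+ k) q.
  elim=> [|k [IH1 IH2]].
    split; first by rewrite /= /p /addB /oneB /oppB /= oppr0 addr0 add0r expr0 f0.
    by rewrite f0 MlN Hqq expr0 aL1.
  have E1 : powp mulF actL actR p at_ k.+1 = mulB mulF actL actR (powp mulF actL actR p at_ k) at_ by [].
  split; last first.
    rewrite (fS k) !MlB -!mFA Hqq -aLmF Hqq.
    by rewrite subrr sub0r.
  rewrite E1 IH1 Hat /mulB /= -exprSr; congr pair.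
  rewrite !LrD !LrN !MrD !MrN -!aLM -exprSr !aLR !aLmF !aLR -mFRL mFA -!aRmF IH2 !RrN !MlN (fS k).
  exact: zid.
have Hword1 : forall ds c, Phi (actR (Tw' ds) c) = phi c * \prod_(d <- ds) phi d.
  by move=> ds c; have := Hword ds 1 c; rewrite aL1 mul1r.
have Hq : forall c, Phi (actR q c) = phi c.
  by move=> c; have := Hword1 [::] c; rewrite big_nil mulr1.
have Tcons0 : forall e, mulF (actR q e) q = Tw' [:: e] by move=> e; exact: (Tcons [::] e).
have Expand : forall k e W, mulF (actR (f k.+1) e) W = mulF (actR (f k) (a * e)) W
    - mulF (actR (f k) a) (mulF (actR q e) W) - actL (a ^+ k.+1) (mulF (actR q e) W).
  by move=> k e W; rewrite fS !RrB -aRM aRmF -aLR !MlB -mFA -aLmF.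
have Factor : forall k e ds c, Phi (actR (mulF (actR (f k) e) (Tw' ds)) c) =
    (\prod_(d <- ds) phi d) * Phi (actR (mulF (actR (f k) e) q) c).
  elim=> [|k IH] e ds c.
    rewrite f0 !RrN !MlN !RrN !PN Tcons Tcons0 !Hword1 !big_cons big_nil; ring.
  rewrite !Expand Tcons Tcons0 !RrB !PB (IH (a * e) ds c) (IH a (e :: ds) c) (IH a [:: e] c).
  rewrite !Hword !big_cons big_nil; ring.
have G0 : forall l, Phi (actR (f 0%N) (a ^+ l)) = - phi (a ^+ l).
  by move=> l; rewrite f0 RrN PN Hq.
have H0 : forall j l, Phi (actR (mulF (actR (f 0%N) (a ^+ j)) q) (a ^+ l)) = - (phi (a ^+ l) * phi (a ^+ j)).
  by move=> j l; rewrite f0 RrN MlN RrN PN Tcons0 Hword1 big_cons big_nil mulr1.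
have GS : forall k l, Phi (actR (f k.+1) (a ^+ l)) = Phi (actR (f k) (a ^+ l.+1))
    - Phi (actR (mulF (actR (f k) a) q) (a ^+ l)) - phi (a ^+ (k.+1 + l)).
  move=> k l; rewrite fS !RrB !PB -aRM -exprS.
  by rewrite (Hword [::]) big_nil mulr1 -exprD.
have HS : forall k j l, Phi (actR (mulF (actR (f k.+1) (a ^+ j)) q) (a ^+ l)) =
    Phi (actR (mulF (actR (f k) (a ^+ j.+1)) q) (a ^+ l))
    - phi (a ^+ j) * Phi (actR (mulF (actR (f k) a) q) (a ^+ l))
    - phi (a ^+ (k.+1 + l)) * phi (a ^+ j).
  move=> k j l; rewrite (Expand k (a ^+ j) q) Tcons0 !RrB !PB -exprS.
  rewrite (Factor k a [:: a ^+ j] (a ^+ l)) Hword !big_cons big_nil -exprD; ring.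
have dX : forall k, distribution phi a 'X^k = phi (a ^+ k).
  move=> k; rewrite /distribution size_polyXn big_ord_recr /= coefXn eqxx mul1r.
  rewrite big1 ?add0r // => i _; rewrite coefXn.
  have Hi := ltn_ord i.
  rewrite (_ : (i == k :> nat) = false) ?mul0r //; lia.
have Ht : forall k, k.+1%:R * phi (a ^+ k) = \sum_(j < k.+1) tau 'X^j * phi (a ^+ (k - j)).
  move=> k; case: Htau => _ Ht0; rewrite -dX Ht0.
  by apply: eq_bigr => j _; rewrite dX.
have m0 : phi (a ^+ 0) = 1 by rewrite expr0.
have SP := @scalar_part R (fun k => phi (a ^+ k))
  (fun k l => Phi (actR (f k) (a ^+ l)))
  (fun k j l => Phi (actR (mulF (actR (f k) (a ^+ j)) q) (a ^+ l)))
  (fun j => tau 'X^j) m0 G0 H0 GS HS Ht n.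
have [C1 _] := Claim1 n.
rewrite /psi /psi' /phiB /phiB' C1 /= dX; split=> //.
by rewrite /= expr0 aR1 in SP; rewrite SP.
Qed.
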